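(* Let $0<\alpha<1$ and let a collection of $m$ p-values be partitioned into $n\ge1$ disjoint chunks $\mathcal C_1,\dots,\mathcal C_n$ of sizes $m_{\mathcal C_1},\dots,m_{\mathcal C_n}$, $\sum_i m_{\mathcal C_i}=m$. Then the set of p-values marked significant by the FastLSU multi-chunk algorithm (defined in the context) at level $\alpha$ is exactly the set of p-values rejected by the Benjamini–Hochberg LSU procedure at level $\alpha$ applied to the single batch $\mathcal C=\bigcup_{i=1}^n\mathcal C_i$ of all $m$ p-values.
   Context: The LSU procedure at level $\alpha$ on $m$ p-values: with $p_{(1)}\le\cdots\le p_{(m)}$ the sorted p-values, let $r=\max\{i:\ p_{(i)}<i\alpha/m\}$ ($r=0$ if none) and reject all p-values $<r\alpha/m$. The FastLSU multi-chunk algorithm: Step 1: in each chunk $\mathcal C_i$ count the p-values $<\alpha$, call this count $r^{(1)}_{i}$. Step $k+1$ ($k\ge1$): in each chunk $\mathcal C_i$ count the p-values $<\big(\sum_{j=1}^n r^{(k)}_{j}\big)\alpha/m$, call this count $r^{(k+1)}_{i}$. Repeat until $\sum_j r^{(k+1)}_j=\sum_j r^{(k)}_j$ (or $k+1=m$), and mark as significant the p-values counted in the final step, i.e. all p-values $<\big(\sum_j r^{(k)}_j\big)\alpha/m$. Note that all thresholds use the global number $m$ of p-values, not the chunk sizes. *)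

(* Defs.v *)
From HB Require Import structures.
From mathcomp Require Import all_boot all_order all_algebra.
Set Implicit Arguments. Unset Strict Implicit. Unset Printing Implicit Defensive.
Import Order.TTheory GRing.Theory Num.Theory.
Local Open Scope ring_scope.

Section FastLSU.
Variables (R : realFieldType) (m n : nat).
Variable alpha : R.
Variable p : 'I_m -> R.
(* chunk j = index of the chunk C_i containing the j-th p-value;
   the chunks {j | chunk j = i}, i < n, form a partition of the m p-values *)
Variable chunk : 'I_m -> 'I_n.

(* threshold  r * alpha / m  (global m, not chunk sizes) *)
Definition thresh (r : nat) : R := r%:R * alpha / m%:R.

Definition chunk_count (i : 'I_n) (t : R) : nat :=
  #|[set j : 'I_m | (chunk j == i) && (p j < t)]|.

Definition total_count (t : R) : nat := (\sum_(i < n) chunk_count i t)%N.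

(* Given the current step index k and the current total
   Rk = sum_j r^(k)_j, compute R(k+1) = sum_j r^(k+1)_j with threshold
   Rk * alpha / m; stop if R(k+1) = Rk or k+1 = m, returning Rk (the total
   whose threshold is used in the final step); otherwise continue.
   [fuel] only bounds the recursion (the algorithm always stops before
   m+1 iterations). *)
Fixpoint fastlsu_loop (fuel k Rk : nat) : nat :=
  match fuel with
  | 0 => Rk
  | fuel'.+1 =>
      let Rk1 := total_count (thresh Rk) in
      if (Rk1 == Rk) || (k.+1 == m) then Rk
      else fastlsu_loop fuel' k.+1 Rk1
  end.

Definition fastlsu_final : nat := fastlsu_loop m.+1 1 (total_count alpha).

Definition fastlsu_significant : {set 'I_m} :=
  [set j : 'I_m | p j < thresh fastlsu_final].

Definition sorted_pvals : seq R := sort <=%R [seq p j | j <- enum 'I_m].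

(* p_(i), the i-th smallest p-value (1-based) *)
Definition pval_ord (i : nat) : R := nth 0 sorted_pvals i.-1.

Definition lsu_ok (i : nat) : bool := (0 < i)%N && (pval_ord i < thresh i).

Definition lsu_r : nat := (\max_(i < m.+1 | lsu_ok i) (i : nat))%N.

Definition lsu_rejected : {set 'I_m} := [set j : 'I_m | p j < thresh lsu_r].

End FastLSU.

(* Main.v *)
Require Import Defs.
From HB Require Import structures.
From mathcomp Require Import all_boot all_order all_algebra.
From mathcomp Require Import zify ring lra.
Import Order.TTheory GRing.Theory Num.Theory.
Local Open Scope ring_scope.

Section Proof.
Variables (R : realFieldType) (m n : nat) (alpha : R)
  (p : 'I_m -> R) (chunk : 'I_m -> 'I_n).

Definition N (t : R) : nat := #|[set j : 'I_m | p j < t]|.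

Lemma total_countE t : total_count p chunk t = N t.
Proof.
rewrite /total_count /N /chunk_count.
under eq_bigr => i _ do rewrite cardE -sum1_size big_enum /=.
rewrite cardE -sum1_size big_enum /=.
rewrite (partition_big chunk xpredT) //=.
apply: eq_bigr => i _; apply: eq_bigl => j; rewrite !inE; case: (chunk j == i); 
  by rewrite ?andbT ?andbF.
Qed.

Lemma N_eq_set t1 t2 : N t1 = N t2 ->
  [set j : 'I_m | p j < t1] = [set j : 'I_m | p j < t2].
Proof.
wlog le12 : t1 t2 / t1 <= t2.
  move=> H; case: (leP t1 t2) => [h|/ltW h] E; first exact: H.
  by symmetry; apply: H.
move=> E; apply/setP/subset_cardP => //.
apply/subsetP => j; rewrite !inE => h; exact: lt_le_trans h le12.
Qed.

Lemma N_mono t1 t2 : t1 <= t2 -> (N t1 <= N t2)%N.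
Proof.
move=> le12; apply: subset_leq_card; apply/subsetP => j; rewrite !inE => h.
exact: lt_le_trans h le12.
Qed.

Lemma N_le t : (N t <= m)%N.
Proof. by rewrite /N -[m in (_ <= m)%N]card_ord max_card. Qed.

Lemma count_sorted (s : seq R) (t : R) k : sorted <=%R s -> (k < size s)%N ->
  (nth 0 s k < t) = (k < count (fun x : R => (x < t)%R) s)%N.
Proof.
elim: s k => [|x s IH] k //= Hs Hk.
have Hs' : sorted <=%R s by move: Hs; case: s {IH Hk} => //= y s /andP[].
case: (leP t x) => hx; last first.
  case: k Hk => [|k] Hk //=; rewrite add1n ltnS; exact: IH.
have Hall := order_path_min (@le_trans _ R) Hs.
have c0 : count (fun x0 : R => (x0 < t)%R) s = 0%N.
  apply/eqP; rewrite -leqn0 leqNgt -has_count; apply/hasPn => y /(allP Hall) hy.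
  by rewrite -leNgt (le_trans hx hy).
rewrite c0 add0n ltn0; apply/negbTE; rewrite -leNgt.
case: k Hk => [|k] Hk //=; apply: le_trans hx (allP Hall _ _).
by rewrite mem_nth.
Qed.


Hypotheses (Ha : 0 < alpha) (Hm : (0 < m)%N) (Hp : forall j, 0 <= p j).

Definition f (r : nat) : nat := N (thresh m alpha r).

Lemma f_mono r1 r2 : (r1 <= r2)%N -> (f r1 <= f r2)%N.
Proof.
move=> le12; apply: N_mono; rewrite /thresh.
apply: ler_wpM2r; first by rewrite invr_ge0 ler0n.
apply: ler_wpM2r; first exact: ltW.
by rewrite ler_nat.
Qed.

Lemma f0 : f 0 = 0%N.
Proof.
rewrite /f /N /thresh mul0r mul0r; apply/eqP; rewrite cards_eq0; apply/eqP/setP => j.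
by rewrite !inE ltNge Hp.
Qed.

Lemma thresh_m : thresh m alpha m = alpha.
Proof.
rewrite /thresh mulrAC divff ?mul1r //; by rewrite pnatr_eq0 -lt0n.
Qed.

Lemma f_le r : (f r <= m)%N.
Proof. exact: N_le. Qed.

Lemma count_sortedE (t : R) :
  count (fun x : R => (x < t)%R) (sorted_pvals p) = N t.
Proof.
rewrite /sorted_pvals (permP (permEl (perm_sort _ _))) count_map /N cardsE cardE.
rewrite /enum_mem size_filter (@eq_filter _ _ predT) // filter_predT.
by apply: eq_count.
Qed.

Lemma size_sorted : size (sorted_pvals p) = m.
Proof. by rewrite /sorted_pvals size_sort size_map size_enum_ord. Qed.

Lemma lsu_okE i : (i <= m)%N -> lsu_ok alpha p i = (0 < i)%N && (i <= f i)%N.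
Proof.
case: i => [|i] //= him; rewrite /lsu_ok /pval_ord /= count_sorted.
- by rewrite count_sortedE.
- by apply: sort_sorted; exact: le_total.
- by rewrite size_sorted.
Qed.

Lemma lsu_r_props : let r := lsu_r alpha p in
  [/\ (r <= f r)%N, (r <= m)%N & forall i, (i <= m)%N -> (i <= f i)%N -> (i <= r)%N].
Proof.
rewrite /lsu_r; split.
- apply: (big_ind (fun x => (x <= f x)%N)).
  + exact: leq0n.
  + by move=> x y hx hy; case: (leqP x y).
  + move=> i; rewrite (@lsu_okE i); first by case/andP.
    by rewrite -ltnS.
- apply: (big_ind (fun x => (x <= m)%N)).
  + exact: leq0n.
  + by move=> x y hx hy; rewrite geq_max hx hy.
  + by move=> i _; rewrite -ltnS.
- move=> i him hi; case: i him hi => [|i] him hi; first exact: leq0n.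
  have hi' : (i.+1 < m.+1)%N by rewrite ltnS.
  apply: (leq_bigmax_cond (Ordinal hi') (P := fun j : 'I_m.+1 => lsu_ok alpha p j)).
  by rewrite (@lsu_okE i.+1 him) /= hi.
Qed.

Lemma r_fixed : f (lsu_r alpha p) = lsu_r alpha p.
Proof.
have [h1 h2 h3] := lsu_r_props.
apply/eqP; rewrite eqn_leq h1 andbT; apply: h3; first exact: f_le.
exact: f_mono.
Qed.

Lemma step s : (lsu_r alpha p <= s <= m)%N ->
  [/\ (lsu_r alpha p <= f s)%N, (f s <= s)%N & (f s = s -> s = lsu_r alpha p)].
Proof.
have [h1 h2 h3] := lsu_r_props.
have hr := r_fixed.
move=> /andP[hs1 hs2].
have A : (lsu_r alpha p <= f s)%N by rewrite -{1}hr; exact: f_mono.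
have B : (f s <= s)%N.
  rewrite leqNgt; apply/negP => hlt.
  have : (f s <= lsu_r alpha p)%N.
    apply: h3; first exact: f_le.
    exact: f_mono (ltnW hlt).
  move=> hh; have := leq_ltn_trans hs1 hlt; by rewrite ltnNge hh.
split => // E; apply/eqP; rewrite eqn_leq hs1 andbT; apply: h3 => //.
by rewrite E.
Qed.

Lemma loop_ok fuel k Rk : (lsu_r alpha p <= Rk <= m)%N ->
  (Rk = lsu_r alpha p \/ ((Rk + k <= m)%N /\ (Rk < fuel)%N)) ->
  f (fastlsu_loop alpha p chunk fuel k Rk) = lsu_r alpha p.
Proof.
elim: fuel k Rk => [|fuel IH] k Rk hR inv /=.
  case: inv => [->|[_]] //; exact: r_fixed.
rewrite total_countE -/(f Rk).
have [s1 s2 s3] := @step Rk hR.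
case: ifP => [/orP[/eqP E|/eqP E]|/negbT].
- by rewrite (s3 E) r_fixed.
- case: inv => [->|[h1 h2]]; first exact: r_fixed.
  have hR1 : (Rk <= 1)%N by move: h1; rewrite -E; lia.
  move: hR => /andP[hr1 hr2].
  case: (f Rk =P Rk) => [E2|NE]; first by rewrite (s3 E2) r_fixed.
  have : (f Rk < Rk)%N by rewrite ltn_neqAle s2 andbT; apply/eqP.
  move=> hlt; have hr0 : lsu_r alpha p = 0%N by lia.
  rewrite hr0; lia.
- rewrite negb_or => /andP[/eqP NE _].
  have hlt : (f Rk < Rk)%N by rewrite ltn_neqAle s2 andbT; apply/eqP.
  apply: IH.
    by rewrite s1 /=; apply: leq_trans (f_le Rk) _.
  case: inv => [E|[h1 h2]]; first by exfalso; apply: NE; rewrite E r_fixed.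
  right; split; lia.
Qed.

End Proof.

Theorem theorem3 (R : realFieldType) (m n : nat) (alpha : R)
  (p : 'I_m -> R) (chunk : 'I_m -> 'I_n) :
  0 < alpha < 1 -> (0 < n)%N -> (forall j, 0 <= p j <= 1) ->
  fastlsu_significant alpha p chunk = lsu_rejected alpha p.
Proof.
move=> /andP[Ha _] _ Hp'.
have Hp : forall j, 0 <= p j by move=> j; case/andP: (Hp' j).
have [Hm0|Hm] := posnP m.
  apply/setP => j; exfalso; move: (ltn_ord j); by rewrite {2}Hm0 ltn0.
rewrite /fastlsu_significant /lsu_rejected.
apply: N_eq_set.
have rf := @r_fixed R m alpha p Ha.
rewrite /f in rf; rewrite rf /fastlsu_final total_countE.
have [h1 h2 h3] := lsu_r_props R m alpha p.
have [s1 s2 s3] := @step R m alpha p Ha m (ltac:(by rewrite h2 leqnn)).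
have E1 : N R m p alpha = f R m alpha p m by rewrite /f (@thresh_m R m alpha Hm).
rewrite E1; apply: (@loop_ok R m n alpha p chunk Ha Hm).
  by rewrite s1 (@f_le R m alpha p).
case: (f R m alpha p m =P m) => [E|NE]; first by left; rewrite E; apply: s3.
right; have : (f R m alpha p m < m)%N by rewrite ltn_neqAle s2 andbT; apply/eqP.
lia.
Qed.
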